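(* Take $\Omega=(0,\infty)$. For any $\delta\in(0,1]$ and any interval $(\alpha,\beta]$ with $0\le\alpha<\beta\le1$, there exist a non-negative integer $m$ and intervals $I,J_1,\dots,J_m$ such that $$(\alpha,\beta]\preceq I\cup J_1\cup\dots\cup J_m,$$ $I\subseteq(0,\delta/2]$, $J_i\subseteq(\delta/2,1]$ for each $1\le i\le m$, and the lengths satisfy $$|I|+\sum_{i=1}^m|J_i|=\beta-\alpha,\qquad |I|>\frac{\delta}{4}(\beta-\alpha).$$
   Context: Let $\Omega$ be either $(0,\infty)$ or $D=\mathbb{C}\setminus\{0,-1,-2,\dots\}$. An admissible instance (relative to $\Omega$) is one of the following finite lists of points, all entries of which are required to lie in $\Omega$: (i) $(z+1,\,z)$ for $z\in\Omega$ with $z+1\in\Omega$ (corresponding to the identity $\Gamma(z+1)=z\Gamma(z)$); (ii) $(z,\,1-z)$ for $z\in\Omega\setminus\mathbb{Z}$ with $1-z\in\Omega$ (corresponding to $\Gamma(z)\Gamma(1-z)=\pi/\sin(\pi z)$); (iii) for an integer $n\ge 2$, $\big(z,\,\tfrac{z}{n},\,\tfrac{z+1}{n},\dots,\tfrac{z+n-1}{n}\big)$ (corresponding to Gauss's multiplication formula $(2\pi)^{(n-1)/2}n^{1/2-z}\Gamma(z)=\prod_{j=0}^{n-1}\Gamma(\tfrac{z+j}{n})$). For $B\subseteq\Omega$, a point $p\in\Omega$ is obtained from $B$ in one step if there is an admissible instance in which $p$ occurs exactly once as an entry and every other entry lies in $B$. Set $B_0=B$, $B_{i+1}=B_i\cup\{p: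 p \text{ obtained from } B_i \text{ in one step}\}$, and $\mathrm{Cl}_\Omega(B)=\bigcup_{i\ge0}B_i$ (the set of points at which the value of $\Gamma$ is determined by its values on $B$ via finitely many applications of the identities). For $A,B\subseteq\Omega$ write $A\preceq B$ if $A\subseteq \mathrm{Cl}_\Omega(B)$. A set $S\subseteq\Omega$ is a fundamental set (for $\Gamma$ on $\Omega$) if $\mathrm{Cl}_\Omega(S)=\Omega$. $|I|$ denotes the length of an interval $I$. *)

(* Defs.v *)
From Stdlib Require Import Reals List Lra.
Import ListNotations.
Open Scope R_scope.

Definition OmegaPos (x : R) : Prop := 0 < x.

Definition admissible (Om : R -> Prop) (l : list R) : Prop :=
  Forall Om l /\
  ( (exists z : R, l = [z + 1; z])
    \/ (exists z : R, (~ exists k : Z, z = IZR k) /\ l = [z; 1 - z])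
    \/ (exists (n : nat) (z : R), (2 <= n)%nat /\
          l = z :: map (fun j : nat => (z + INR j) / INR n) (seq 0 n)) ).

Definition once_others_in (B : R -> Prop) (p : R) (l : list R) : Prop :=
  exists l1 l2 : list R,
    l = l1 ++ p :: l2 /\ ~ In p l1 /\ ~ In p l2 /\ Forall B (l1 ++ l2).

Definition one_step (Om : R -> Prop) (B : R -> Prop) (p : R) : Prop :=
  Om p /\ exists l, admissible Om l /\ once_others_in B p l.

Fixpoint Biter (Om : R -> Prop) (B : R -> Prop) (i : nat) : R -> Prop :=
  match i with
  | O => B
  | S i' => fun p => Biter Om B i' p \/ one_step Om (Biter Om B i') p
  end.

Definition Cl (Om : R -> Prop) (B : R -> Prop) (p : R) : Prop :=
  exists i : nat, Biter Om B i p.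

Definition preceq (Om : R -> Prop) (A B : R -> Prop) : Prop :=
  forall x, A x -> Cl Om B x.

Record interval := mkInterval {
  lo : R; hi : R; lo_closed : bool; hi_closed : bool }.

Definition well_formed (I : interval) : Prop := lo I <= hi I.

Definition in_interval (I : interval) (x : R) : Prop :=
  (if lo_closed I then lo I <= x else lo I < x) /\
  (if hi_closed I then x <= hi I else x < hi I).

Definition ilength (I : interval) : R := hi I - lo I.

Definition subset (A B : R -> Prop) : Prop := forall x, A x -> B x.

Definition union_intervals (I : interval) (Js : list interval) (x : R) : Prop :=
  in_interval I x \/ exists J, In J Js /\ in_interval J x.

Definition sum_lengths (Js : list interval) : R :=
  fold_right (fun J s => ilength J + s) 0 Js.

Definition half_open (a b : R) (x : R) : Prop := a < x <= b.

(* Main.v *)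
Require Import Defs.
From Stdlib Require Import Reals List.
From Stdlib Require Import Lra Lia.
Import ListNotations.
Open Scope R_scope.

Definition Imk (k : nat) (a b : R) : interval := mkInterval (a / 2 ^ k) (b / 2 ^ k) false true.

Fixpoint Jsk (k : nat) (a b : R) : list interval :=
  match k with
  | O => []
  | S k' => mkInterval ((a + 1) / 2) ((b + 1) / 2) false true :: Jsk k' (a / 2) (b / 2)
  end.

Lemma pow2_pos k : 0 < 2 ^ k.
Proof. apply pow_lt; lra. Qed.

Lemma Imk_S k a b : Imk k (a / 2) (b / 2) = Imk (S k) a b.
Proof.
  unfold Imk. pose proof (pow2_pos k). simpl. f_equal; field; lra.
Qed.

Lemma Biter_mono0 B k x : B x -> Biter OmegaPos B k x.
Proof. induction k; simpl; auto. Qed.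

Lemma key k : forall a b (B : R -> Prop), 0 <= a ->
  (forall x, in_interval (Imk k a b) x -> B x) ->
  (forall J x, In J (Jsk k a b) -> in_interval J x -> B x) ->
  forall z, a < z <= b -> Biter OmegaPos B k z.
Proof.
  induction k as [|k IH]; intros a b B Ha HI HJ z Hz.
  - simpl. apply HI. unfold in_interval, Imk; simpl.
    replace (a / 1) with a by field. replace (b / 1) with b by field. lra.
  - assert (H1 : Biter OmegaPos B k (z / 2)).
    { apply (IH (a / 2) (b / 2)).
      + lra.
      + intros x Hx. apply HI. rewrite <- Imk_S. exact Hx.
      + intros J x HJin Hx. apply (HJ J x); simpl; auto.
      + lra. }
    assert (H2 : Biter OmegaPos B k ((z + 1) / 2)).
    { apply Biter_mono0. apply (HJ (mkInterval ((a + 1) / 2) ((b + 1) / 2) false true)).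
      simpl; auto. unfold in_interval; simpl. lra. }
    simpl. destruct (Req_dec z 1) as [E|E].
    + left. replace z with ((z + 1) / 2) by (rewrite E; field). exact H2.
    + right. split. unfold OmegaPos; lra.
      exists [z; (z + INR 0) / INR 2; (z + INR 1) / INR 2].
      replace ((z + INR 0) / INR 2) with (z / 2) by (simpl; field).
      replace ((z + INR 1) / INR 2) with ((z + 1) / 2) by (simpl; field).
      split.
      * split.
        -- repeat constructor; unfold OmegaPos; lra.
        -- right. right. exists 2%nat, z. split. lia.
           simpl. f_equal; f_equal; f_equal; field.
      * exists [], [z / 2; (z + 1) / 2]. repeat split.
        -- intros H; inversion H.
        -- simpl. intros [H|[H|H]]; [lra|lra|contradiction].
        -- simpl. repeat constructor; auto.
Qed.

Lemma Jsk_wf k : forall a b, a <= b -> Forall well_formed (Jsk k a b).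
Proof.
  induction k; intros a b H; simpl; constructor.
  - unfold well_formed; simpl; lra.
  - apply IHk; lra.
Qed.

Lemma Jsk_sub k (d : R) : d <= 1 -> forall a b, 0 <= a -> b <= 1 ->
  Forall (fun J => subset (in_interval J) (half_open (d / 2) 1)) (Jsk k a b).
Proof.
  intro Hd; induction k; intros a b Ha Hb; simpl; constructor.
  - intros x Hx; unfold in_interval in Hx; simpl in Hx; unfold half_open; lra.
  - apply IHk; lra.
Qed.

Lemma Jsk_len k : forall a b, sum_lengths (Jsk k a b) + ilength (Imk k a b) = b - a.
Proof.
  induction k; intros a b.
  - unfold ilength, Imk; simpl; field.
  - simpl. rewrite <- Imk_S. specialize (IHk (a/2) (b/2)).
    unfold ilength at 1; simpl. lra.
Qed.

Lemma INR_pow n : INR n + 1 <= 2 ^ n.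
Proof.
  induction n. simpl; lra. rewrite S_INR. simpl.
  assert (1 <= 2 ^ n) by (pose proof (pos_INR n); lra). lra.
Qed.

Lemma find_k x : exists k, x <= 2 ^ k /\ (k = 0%nat \/ exists k', k = S k' /\ 2 ^ k' < x).
Proof.
  destruct (INR_archimed 1 x) as [n Hn]; [lra|].
  assert (Hx : x <= 2 ^ n) by (pose proof (INR_pow n); lra).
  clear Hn. revert Hx. induction n; intro Hx.
  - exists 0%nat; auto.
  - destruct (Rle_lt_dec x (2 ^ n)) as [L|L].
    + apply IHn; auto.
    + exists (S n); split; auto. right; exists n; auto.
Qed.

Theorem mainTheorem7 (delta alpha beta : R)
  (Hdelta : 0 < delta <= 1) (Hab : 0 <= alpha /\ alpha < beta /\ beta <= 1) :
  exists (I : interval) (Js : list interval),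
    well_formed I /\ Forall well_formed Js /\
    preceq OmegaPos (half_open alpha beta) (union_intervals I Js) /\
    subset (in_interval I) (half_open 0 (delta / 2)) /\
    Forall (fun J => subset (in_interval J) (half_open (delta / 2) 1)) Js /\
    ilength I + sum_lengths Js = beta - alpha /\
    ilength I > delta / 4 * (beta - alpha).
Proof.
  destruct (find_k (2 * beta / delta)) as [k [Hk1 Hk2]].
  pose proof (pow2_pos k) as Hp.
  assert (Hb : 2 * beta <= 2 ^ k * delta).
  { apply (Rmult_le_compat_r delta) in Hk1; [|lra].
    replace (2 * beta / delta * delta) with (2 * beta) in Hk1 by (field; lra). lra. }
  assert (Hlt : 2 ^ k * delta < 4).
  { destruct Hk2 as [->|[k' [-> Hk']]].
    - simpl; lra.
    - apply (Rmult_lt_compat_r delta) in Hk'; [|lra].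
      replace (2 * beta / delta * delta) with (2 * beta) in Hk' by (field; lra).
      simpl. lra. }
  exists (Imk k alpha beta), (Jsk k alpha beta).
  split; [|split; [|split; [|split; [|split; [|split]]]]].
  - unfold well_formed, Imk; simpl. apply Rmult_le_compat_r.
    left; apply Rinv_0_lt_compat; auto. lra.
  - apply Jsk_wf; lra.
  - intros z Hz. exists k. apply (key k alpha beta); try lra.
    + intros x Hx; left; auto.
    + intros J x HJ Hx; right; eauto.
    + exact Hz.
  - intros x Hx. unfold in_interval, Imk in Hx; simpl in Hx. unfold half_open.
    assert (0 <= alpha / 2 ^ k) by (unfold Rdiv; apply Rmult_le_pos; [lra | left; apply Rinv_0_lt_compat; lra]).
    assert (beta / 2 ^ k <= delta / 2).
    { apply (Rmult_le_reg_r (2 ^ k)); auto.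
      replace (beta / 2 ^ k * 2 ^ k) with beta by (field; lra). lra. }
    lra.
  - apply Jsk_sub; lra.
  - pose proof (Jsk_len k alpha beta). lra.
  - unfold ilength, Imk; simpl.
    replace (beta / 2 ^ k - alpha / 2 ^ k) with ((beta - alpha) / 2 ^ k) by (field; lra).
    apply (Rmult_lt_reg_r (2 ^ k)); auto.
    replace ((beta - alpha) / 2 ^ k * 2 ^ k) with (beta - alpha) by (field; lra).
    assert (0 < beta - alpha) by lra.
    replace (delta / 4 * (beta - alpha) * 2 ^ k) with ((2 ^ k * delta) * (beta - alpha) / 4) by field.
    assert ((2 ^ k * delta) * (beta - alpha) < 4 * (beta - alpha)) by (apply Rmult_lt_compat_r; lra).
    lra.
Qed.
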